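(* Let $n\geq 2$, $i\geq 1$ and $2\leq m_1<\dots<m_i\leq n$. Then $A^{C_{m_1}\cdots C_{m_i}}_{[2,n],\emptyset}=A^{\mathrm{id}}_{I,J}$, where $J=\{m_1,\dots,m_i\}$ and $I=[2,n]\setminus J$.
   Context: Let $w_{ij}$, $1\leq i,j\leq n$, be formal variables subject only to $w_{ij}+w_{ji}=0$. Let $[2,n]=\{2,\dots,n\}$. For $\sigma\in S_n$ and a disjoint decomposition $I\sqcup J=[2,n]$, set $$A^\sigma_{I,J}:=\sum_{i\in I}\sum_{\ell=1}^{i-1}w_{\sigma(\ell)\sigma(i)}-\sum_{j\in J}\sum_{\ell=1}^{j-1}w_{\sigma(\ell)\sigma(j)}.$$ Permutations are composed right-to-left: $(\sigma\tau)(k)=\sigma(\tau(k))$. For $m\geq 2$, $C_m$ is the cycle $(1,m,m-1,\dots,2)$, i.e. $1\mapsto m\mapsto m-1\mapsto\dots\mapsto 2\mapsto 1$. *)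

(* Defs.v *)
From mathcomp Require Import all_boot all_order all_fingroup all_algebra.
From mathcomp Require Import zify.
Set Implicit Arguments. Unset Strict Implicit. Unset Printing Implicit Defensive.
Import GRing.Theory.
Local Open Scope ring_scope.

(* Convention: the points 1..n of the paper are encoded by the ordinals
   0..n-1 of 'I_n (point k <-> ordinal k-1). *)

Definition pval n (s : {perm 'I_n}) (k : nat) : nat :=
  match insub k.-1 with Some i => (s i).+1 | None => k end.

Definition Ssum (V : zmodType) n (w : nat -> nat -> V) (s : {perm 'I_n}) (k : nat) : V :=
  \sum_(1 <= l < k) w (pval s l) (pval s k).

Definition Aexpr (V : zmodType) n (w : nat -> nat -> V) (s : {perm 'I_n})
  (I J : pred nat) : V :=
  \sum_(2 <= k < n.+1 | I k) Ssum w s k - \sum_(2 <= k < n.+1 | J k) Ssum w s k.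

(* The cycle C_m = (1, m, m-1, ..., 2), in 0-based encoding:
   0 |-> m-1, j |-> j-1 for 1 <= j <= m-1, identity otherwise
   (identity altogether if m > n, where C_m is not used). *)
Definition cyc_nat (n m k : nat) : nat :=
  if (n < m)%N then k else if k == 0%N then m.-1 else if (k < m)%N then k.-1 else k.

Definition cycf n m (i : 'I_n) : 'I_n := insubd i (cyc_nat n m i).

Lemma cyc_nat_lt n m k : (k < n)%N -> (cyc_nat n m k < n)%N.
Proof. move=> Hk; rewrite /cyc_nat; case: (ltnP n m) => // H; case: eqP => _; first lia.
case: (ltnP k m); lia. Qed.

Lemma cycf_inj n m : injective (@cycf n m).
Proof.
move=> i j /(congr1 val); rewrite /cycf !val_insubd !cyc_nat_lt //.
move=> H; apply: val_inj => /=; move: H; rewrite /cyc_nat.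
have Hi := ltn_ord i; have Hj := ltn_ord j.
case: (ltnP n m) => // H; case: (eqVneq (nat_of_ord i) 0%N) => ?; case: (eqVneq (nat_of_ord j) 0%N) => ?;
case: (ltnP (nat_of_ord i) m); case: (ltnP (nat_of_ord j) m); lia.
Qed.

Definition Cyc n m : {perm 'I_n} := perm (@cycf_inj n m).

(* Composition in the paper's convention: (pcomp s t) k = s (t k). *)
Definition pcomp n (s t : {perm 'I_n}) : {perm 'I_n} := (t * s)%g.

Definition cycprod n (ms : seq nat) : {perm 'I_n} :=
  foldr (fun m acc => pcomp (Cyc n m) acc) 1%g ms.

(* Main.v *)
Require Import Defs.
From mathcomp Require Import all_boot all_order all_fingroup all_algebra.
From mathcomp Require Import zify.
Import GRing.Theory.
Set Implicit Arguments.
Lemma cinv_val n m (x : 'I_n) : (2 <= m <= n)%N ->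
  nat_of_ord ((Cyc n m)^-1%g x) =
  (if nat_of_ord x == m.-1 then 0 else if (nat_of_ord x < m.-1)%N then (nat_of_ord x).+1 else nat_of_ord x)%N.
Proof.
move=> Hm. set y := (Cyc n m)^-1%g x.
have -> : x = Cyc n m y by rewrite /y permKV.
rewrite permE /cycf val_insubd cyc_nat_lt // /cyc_nat.
have Hy := ltn_ord y. rewrite -[val y]/(nat_of_ord y).
have -> : (n < m)%N = false by lia.
case E1: (nat_of_ord y == 0)%N; case E2: (nat_of_ord y < m)%N;
  case: ifP => H3; try case: ifP => H4; lia.
Qed.

Lemma inv_cyc n ms : sorted ltn ms -> all (fun m => 2<=m<=n)%N ms ->
  forall a b : 'I_n, (a < b)%N ->
  (((cycprod n ms)^-1%g b : nat) < (cycprod n ms)^-1%g a)%N = (b.+1 \in ms).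
Proof.
elim: ms => [|m ms IH] /=.
  by move=> _ _ a b Hab; rewrite invg1 !perm1 in_nil; lia.
move=> Hs /andP [Hm Hall] a b Hab.
have Hs' := path_sorted Hs.
have Hmin := order_path_min ltn_trans Hs.
have notin : forall x, (x <= m)%N -> x \notin ms.
  by move=> x Hx; apply/negP => /(allP Hmin); lia.
rewrite /pcomp invMg !permM in_cons.
set t := (cycprod n ms)^-1%g.
set ca := (Cyc n m)^-1%g a. set cb := (Cyc n m)^-1%g b.
have HA := @cinv_val n m a Hm. have HB := @cinv_val n m b Hm.
rewrite -/ca in HA; rewrite -/cb in HB.
have Hne : nat_of_ord (t cb) != nat_of_ord (t ca).
  apply/negP => /eqP /val_inj /perm_inj /perm_inj /eqP. rewrite -val_eqE /=. lia.
have [Hbm|[Hbm|Hbm]] : (b.+1 < m \/ b.+1 = m \/ m < b.+1)%N by lia.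
- have HB1 : nat_of_ord cb = b.+1 by rewrite HB; case: eqP => ?; [lia|]; case: ifP => ?; lia.
  have HA1 : nat_of_ord ca = a.+1 by rewrite HA; case: eqP => ?; [lia|]; case: ifP => ?; lia.
  rewrite IH //; last lia.
  rewrite HB1 (negbTE (notin _ _)); last lia. rewrite (negbTE (notin b.+1 _)); last lia.
  by rewrite (_ : (b.+1 == m) = false) //; lia.
- have HB1 : nat_of_ord cb = 0 by rewrite HB; case: eqP => ?; lia.
  have HA1 : nat_of_ord ca = a.+1 by rewrite HA; case: eqP => ?; [lia|]; case: ifP => ?; lia.
  have := IH Hs' Hall cb ca ltac:(lia).
  rewrite HA1 (negbTE (notin _ _)); last lia.
  rewrite (_ : (b.+1 == m) = true) /=; last lia.
  move: Hne; rewrite /t. lia.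
- have HB1 : nat_of_ord cb = b by rewrite HB; case: eqP => ?; [lia|]; case: ifP => ?; lia.
  have HA1 : (nat_of_ord ca < b)%N by rewrite HA; case: eqP => ?; [lia|]; case: ifP => ?; lia.
  rewrite IH //; last lia.
  by rewrite HB1 (_ : (b.+1 == m) = false) //; lia.
Qed.
Local Open Scope ring_scope.

Lemma pval_ord n (s : {perm 'I_n}) (j : 'I_n) : Defs.pval s (j.+1) = (s j).+1.
Proof. by rewrite /Defs.pval /= -[nat_of_ord j]/(val j) valK. Qed.

Lemma Ssum_ord (V : zmodType) n (w : nat -> nat -> V) (s : {perm 'I_n}) (k : 'I_n) :
  Ssum w s (k.+1) = \sum_(l < n | (l < k)%N) w (s l).+1 (s k).+1.
Proof.
rewrite /Ssum pval_ord big_add1 /= (big_nat_widen _ _ _ _ _ (ltnW (ltn_ord k))) big_mkord.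
by apply: eq_bigr => l _; rewrite pval_ord.
Qed.

Lemma sumk (V : zmodType) n (P : pred nat) (F : nat -> V) : (0 < n)%N -> F 1%N = 0 ->
  \sum_(2 <= k < n.+1 | P k) F k = \sum_(k < n | P k.+1) F k.+1.
Proof.
move=> Hn F1.
transitivity (\sum_(1 <= i < n.+1 | P i) F i); last by rewrite big_add1 big_mkord.
rewrite [RHS]big_ltn_cond /=; last lia. by case: (P 1%N); rewrite ?F1 ?add0r.
Qed.

Lemma Aexpr_ord (V : zmodType) n (w : nat -> nat -> V) (s : {perm 'I_n}) (P : pred nat) :
  (0 < n)%N ->
  \sum_(2 <= k < n.+1 | P k) Ssum w s k =
  \sum_(k < n | P k.+1) \sum_(l < n | (l < k)%N) w (s l).+1 (s k).+1.
Proof.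
move=> Hn; rewrite sumk //; first by apply: eq_bigr => k _; rewrite Ssum_ord.
by rewrite /Ssum big_geq.
Qed.

Lemma permv_eq n (s : {perm 'I_n}) (x y : 'I_n) :
  (nat_of_ord (s x) == nat_of_ord (s y)) = (nat_of_ord x == nat_of_ord y).
Proof. by rewrite !(inj_eq val_inj) (inj_eq perm_inj). Qed.

Lemma pair_antisym (V : zmodType) n (g : 'I_n -> 'I_n -> V) (s : {perm 'I_n}) :
  (forall a b, g a b = - g b a) ->
  \sum_(p : 'I_n * 'I_n | (p.2 < p.1)%N) g (s p.2) (s p.1) =
  \sum_(p : 'I_n * 'I_n | (p.2 < p.1)%N)
     (if ((s^-1)%g p.1 < (s^-1)%g p.2)%N then - g p.2 p.1 else g p.2 p.1).
Proof.
move=> Hg.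
rewrite (reindex (fun p => ((s^-1)%g p.1, (s^-1)%g p.2))) /=; last first.
  exists (fun p => (s p.1, s p.2)) => p _ /=; by rewrite ?permK ?permKV -?surjective_pairing.
under eq_bigr => p _ do rewrite !permKV.
rewrite (bigID (fun p : 'I_n * 'I_n => (p.2 < p.1)%N)) /=.
rewrite [RHS](bigID (fun p : 'I_n * 'I_n => ((s^-1)%g p.1 < (s^-1)%g p.2)%N)) /= addrC.
congr (_ + _).
  rewrite (reindex (fun p : 'I_n * 'I_n => (p.2, p.1))) /=; last first.
    by exists (fun p : 'I_n * 'I_n => (p.2, p.1)) => p _ /=; rewrite -?surjective_pairing.
  apply: eq_big => p /=.
    have := @permv_eq _ (s^-1)%g p.1 p.2; case: (ltngtP p.1 p.2) => H; rewrite ?H;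
    case: (ltngtP ((s^-1)%g p.1) ((s^-1)%g p.2)) => H'; try lia.
  by move=> /andP[-> _]; rewrite Hg.
apply: eq_big => p /=; last by move=> /andP[H _]; rewrite ifF //; lia.
have := @permv_eq _ (s^-1)%g p.1 p.2; case: (ltngtP p.1 p.2) => H; rewrite ?H;
case: (ltngtP ((s^-1)%g p.1) ((s^-1)%g p.2)) => H'; try lia.
Qed.

Theorem lemma3p8 (V : zmodType) (w : nat -> nat -> V) (n : nat) (ms : seq nat) :
  (forall a b : nat, (0 < a <= n)%N -> (0 < b <= n)%N -> w a b + w b a = 0) ->
  (2 <= n)%N ->
  (0 < size ms)%N ->
  sorted ltn ms ->
  all (fun m => (2 <= m <= n)%N) ms ->
  Aexpr w (cycprod n ms) (fun _ => true) (fun _ => false)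
  = Aexpr w (1%g : {perm 'I_n}) (fun k => k \notin ms) (fun k => k \in ms).
Proof.
move=> Hw Hn _ Hs Hall.
set g := fun a b : 'I_n => w (nat_of_ord a).+1 (nat_of_ord b).+1.
have Hg : forall a b, g a b = - g b a.
  move=> a b; apply/eqP; rewrite -addr_eq0; apply/eqP; apply: Hw.
    by have := ltn_ord a; lia.
  by have := ltn_ord b; lia.
rewrite /Aexpr !Aexpr_ord; try lia.
rewrite big_pred0_eq subr0 pair_big_dep /=.
transitivity (\sum_(p : 'I_n * 'I_n | (p.2 < p.1)%N) g ((cycprod n ms) p.2) ((cycprod n ms) p.1)).
  by apply: eq_bigl.
rewrite pair_antisym //.
transitivity (\sum_(p : 'I_n * 'I_n | (p.2 < p.1)%N)
     (if (p.1.+1 \in ms) then - g p.2 p.1 else g p.2 p.1)).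
  by apply: eq_bigr => p Hp; rewrite inv_cyc.
rewrite -(pair_big_dep xpredT (fun k l : 'I_n => (l < k)%N)
   (fun k l => if (k.+1 \in ms) then - g l k else g l k)) /=.
rewrite (bigID (fun k : 'I_n => k.+1 \in ms)) /= addrC.
congr (_ + _).
  by apply: eq_bigr => k /negbTE Hk; apply: eq_bigr => l _; rewrite Hk !perm1.
rewrite -sumrN; apply: eq_bigr => k Hk; rewrite -sumrN; apply: eq_bigr => l _.
by rewrite Hk !perm1.
Qed.
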